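(* Let $F$ be a field of characteristic two and let $(A,\sigma)$ be a totally decomposable central simple $F$-algebra with orthogonal involution. If $\alpha+\sum_{i=1}^m\sigma(x_i)x_i\in\mathrm{Alt}(A,\sigma)$ for some $\alpha\in F$ and $x_1,\dots,x_m\in A$, then $\alpha\in Q(\mathfrak{Pf}(A,\sigma))$.
   Context: Involutions are of the first kind. $(A,\sigma)$ is totally decomposable if $(A,\sigma)\simeq\bigotimes_{i=1}^n(Q_i,\sigma_i)$ with quaternion $F$-algebras with involution. $\mathrm{Alt}(A,\sigma)=\{\sigma(x)-x\mid x\in A\}$. The Pfister invariant $\mathfrak{Pf}(A,\sigma)$ is the bilinear Pfister form $\langle\!\langle\alpha_1,\dots,\alpha_n\rangle\!\rangle=\langle1,\alpha_1\rangle\otimes\cdots\otimes\langle1,\alpha_n\rangle$, where $\alpha_i\in F^\times$ represents $\mathrm{disc}\,\sigma_i\in F^\times/F^{\times2}$ (independent of the decomposition up to isometry). For a symmetric bilinear form $\mathfrak b$ on $V$, $Q(\mathfrak b)=\{\mathfrak b(v,v)\mid 0\ne v\in V\}\cup\{0\}$. *)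

(* Defs.v *)
From HB Require Import structures.
From mathcomp Require Import all_boot all_order all_algebra all_field.
Set Implicit Arguments. Unset Strict Implicit. Unset Printing Implicit Defensive.
Import GRing.Theory.
Local Open Scope ring_scope.

Section Defs.
Variables (F : fieldType) (A : falgType F).

Definition is_involution (sigma : A -> A) : Prop :=
  [/\ forall (k : F) (x y : A), sigma (k *: x + y) = k *: sigma x + sigma y,
      forall x y : A, sigma (x * y) = sigma y * sigma x
    & forall x : A, sigma (sigma x) = x].

Definition Alt (sigma : A -> A) (y : A) : Prop := exists x : A, y = sigma x - x.

(* Characteristic two: an involution is symplectic iff 1 \in Alt(A,sigma)
   (KMRT, Prop. 2.6); orthogonal = not symplectic. *)
Definition orthogonal_inv (sigma : A -> A) : Prop := ~ Alt sigma 1.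

Definition quat_basis (u v : A) : 4.-tuple A := [tuple 1; u; v; u * v].
Definition quat_span (u v : A) : {vspace A} := <<quat_basis u v>>%VS.

(* u, v generate a (4-dimensional) quaternion subalgebra [a,b)_F of A
   in characteristic 2: u^2 + u = a, v^2 = b <> 0, vu = (u+1)v *)
Definition is_quaternion_pair (u v : A) (a b : F) : Prop :=
  [/\ u * u + u = a%:A, v * v = b%:A, b != 0, v * u = (u + 1) * v
    & free (quat_basis u v)].

(* canonical (symplectic) involution of the quaternion algebra spanned by
   1,u,v,uv: x0 + x1 u + x2 v + x3 uv |-> x0 + x1 (u+1) + x2 v + x3 uv *)
Definition quat_canon (u v : A) (y : A) : A :=
  y + (coord (quat_basis u v) (inord 1) y)%:A.

Definition quat_Nrd (u v : A) (y : A) : A := y * quat_canon u v y.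

(* (A, sigma) = (Q_1,sigma_1) (x) ... (x) (Q_n,sigma_n), with Q_i the
   quaternion subalgebras generated by u_i, v_i (internal tensor product:
   sigma-stable, pairwise commuting, and dim A = 4^n). *)
Definition totally_decomposed (sigma : A -> A) (n : nat) (u v : 'I_n -> A)
    (a b : 'I_n -> F) : Prop :=
  [/\ forall i, is_quaternion_pair (u i) (v i) (a i) (b i),
      forall i, sigma (u i) \in quat_span (u i) (v i) /\
                sigma (v i) \in quat_span (u i) (v i),
      forall i j, i != j -> forall x y, x \in quat_span (u i) (v i) ->
                  y \in quat_span (u j) (v j) -> x * y = y * x
    & (\dim (fullv : {vspace A}) = 4 ^ n)%N].

(* d in F^x represents disc(sigma_i) in F^x/F^x2, sigma_i = sigma restricted
   to Q_i: disc sigma_i = Nrd(z) for an invertible z in Alt(Q_i, sigma_i). *)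
Definition represents_disc (sigma : A -> A) (u v : A) (d : F) : Prop :=
  d != 0 /\ exists2 x, x \in quat_span u v &
     quat_Nrd u v (sigma x - x) = d%:A.

End Defs.

(* The bilinear Pfister form <<d_1,...,d_n>> = (x)_i <1, d_i> is the diagonal
   form on F^(2^n) (basis indexed by subsets S of {1..n}) with entries
   prod_{i in S} d_i. *)
Definition pfister_entry (F : fieldType) (n : nat) (d : 'I_n -> F)
  (S : {set 'I_n}) : F := \prod_(i in S) d i.

Definition pfister_value (F : fieldType) (n : nat) (d : 'I_n -> F)
  (w : {set 'I_n} -> F) : F := \sum_(S : {set 'I_n}) pfister_entry d S * w S ^+ 2.

Definition Q_pfister (F : fieldType) (n : nat) (d : 'I_n -> F) (x : F) : Prop :=
  (exists2 w : {set 'I_n} -> F, (exists S, w S != 0) & x = pfister_value d w)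
  \/ x = 0.

(* Main.v *)
Require Import Defs.
From HB Require Import structures.
From mathcomp Require Import all_boot all_order all_algebra all_field.
From mathcomp Require Import ring zify.
From Stdlib Require Import ClassicalEpsilon.
Import GRing.Theory.
Local Open Scope ring_scope.

Set Implicit Arguments. Unset Strict Implicit. Unset Printing Implicit Defensive.

Section Quat.
Variables (F : fieldType) (A : falgType F).

Record q4 := Q4 { q0 : F; q1 : F; q2 : F; q3 : F }.

Definition qadd (x y : q4) := Q4 (q0 x + q0 y) (q1 x + q1 y) (q2 x + q2 y) (q3 x + q3 y).
Definition qscale (c : F) (x : q4) := Q4 (c * q0 x) (c * q1 x) (c * q2 x) (c * q3 x).

Section Pair.
Variables (u v : A) (a b : F).
Hypotheses (huu : u * u = a%:A + u) (hvv : v * v = b%:A) (hvu : v * u = v - u * v).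

Definition emb_def (x : q4) : A :=
  (q0 x)%:A + q1 x *: u + q2 x *: v + q3 x *: (u * v).
Fact emb_key : unit. Proof. exact: tt. Qed.
Definition emb := locked_with emb_key emb_def.
Lemma embE x : emb x = (q0 x)%:A + q1 x *: u + q2 x *: v + q3 x *: (u * v).
Proof. by rewrite /emb unlock. Qed.

Definition qmul (x y : q4) : q4 :=
  let: Q4 x0 x1 x2 x3 := x in let: Q4 y0 y1 y2 y3 := y in
  Q4 (x0*y0 + a*x1*y1 + b*x2*y2 + b*x2*y3 - a*b*x3*y3)
     (x0*y1 + x1*y0 + x1*y1 - b*x2*y3 + b*x3*y2)
     (x0*y2 + x2*y0 + a*x1*y3 + x2*y1 - a*x3*y1)
     (x0*y3 + x3*y0 + x1*y2 + x1*y3 - x2*y1).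

Lemma emb_add x y : emb x + emb y = emb (qadd x y).
Proof.
rewrite !embE /qadd /= !scalerDl.
rewrite addrACA; congr (_ + _); rewrite addrACA; congr (_ + _).
by rewrite addrACA.
Qed.

Lemma emb_scale c x : c *: emb x = emb (qscale c x).
Proof. by rewrite !embE /= !scalerDr !scalerA -scalerA. Qed.

Lemma emb_opp x : - emb x = emb (qscale (-1) x).
Proof. by rewrite -emb_scale scaleN1r. Qed.

Lemma emb1 : 1 = emb (Q4 1 0 0 0).
Proof. by rewrite embE /= !scale0r !addr0 scale1r. Qed.
Lemma embu : u = emb (Q4 0 1 0 0).
Proof. by rewrite embE /= !scale0r scale1r add0r !addr0. Qed.
Lemma embv : v = emb (Q4 0 0 1 0).
Proof. by rewrite embE /= !scale0r scale1r !add0r addr0. Qed.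
Lemma embw : u * v = emb (Q4 0 0 0 1).
Proof. by rewrite embE /= !scale0r scale1r !add0r. Qed.

Lemma t_uw : u * (u * v) = a *: v + u * v.
Proof. by rewrite mulrA huu mulrDl mulr_algl. Qed.
Lemma t_vw : v * (u * v) = b%:A - b *: u.
Proof. by rewrite mulrA hvu mulrBl -mulrA hvv mulr_algr. Qed.
Lemma t_wu : (u * v) * u = - (a *: v).
Proof. by rewrite -mulrA hvu mulrBr t_uw opprD addrCA subrr addr0. Qed.
Lemma t_wv : (u * v) * v = b *: u.
Proof. by rewrite -mulrA hvv mulr_algr. Qed.
Lemma t_ww : (u * v) * (u * v) = - (a * b)%:A.
Proof. by rewrite mulrA t_wu mulNr -scalerAl hvv scalerA -scaleNr. Qed.

Lemma emb_mul x y : emb x * emb y = emb (qmul x y).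
Proof.
case: x => x0 x1 x2 x3; case: y => y0 y1 y2 y3.
rewrite !embE /=.
rewrite !mulrDl !mulrDr.
rewrite !mulr_algl !mulr_algr -!scalerAl -!scalerAr !scalerA.
rewrite huu hvv hvu t_uw t_vw t_wu t_wv t_ww.
rewrite embw emb1 embu embv.
rewrite !(scalerDr, scalerN, emb_scale, emb_opp, emb_add).
rewrite /qscale /qadd /=; congr (emb (Q4 _ _ _ _)); ring.
Qed.

Definition qc (j : nat) (y : q4) : F :=
  match j with 0 => q0 y | 1 => q1 y | 2 => q2 y | _ => q3 y end.
Definition qe (m : nat) : q4 :=
  match m with 0 => Q4 1 0 0 0 | 1 => Q4 0 1 0 0 | 2 => Q4 0 0 1 0 | _ => Q4 0 0 0 1 end.
Definition EP (j : nat) : q4 :=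
  match j with 0 => Q4 (b * (2 * a + 1)) (- b) 0 0 | 1 => Q4 (- b) (2 * b) 0 0
   | 2 => Q4 0 0 (2 * a) 1 | _ => Q4 0 0 1 (-2) end.

Definition Oq (j : nat) (w : A) : A :=
  emb (qe 0) * emb (EP j) * w * emb (EP 0) + emb (qe 1) * emb (EP j) * w * emb (EP 1) +
  emb (qe 2) * emb (EP j) * w * emb (EP 2) + emb (qe 3) * emb (EP j) * w * emb (EP 3).

Lemma emb_comm (R : A) x : u * R = R * u -> v * R = R * v -> emb x * R = R * emb x.
Proof.
move=> hu hv.
have huv : (u * v) * R = R * (u * v) by rewrite -mulrA hv mulrA hu mulrA.
by rewrite embE !mulrDl !mulrDr -!scalerAl -!scalerAr !mul1r !mulr1 hu hv huv.
Qed.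

Lemma Oq_emb (R : A) j y : u * R = R * u -> v * R = R * v -> (j < 4)%N ->
  Oq j (emb y * R) = (qc j y * (b * (4 * a + 1)) ^+ 2) *: R.
Proof.
move=> hu hv hj.
have cR : forall x, emb x * R = R * emb x by move=> x; exact: emb_comm.
rewrite /Oq [LHS]/= !mulrA -!(mulrA _ R) -!cR !mulrA !emb_mul.
rewrite -!mulrDl !emb_add -mulr_algl emb1 emb_scale; congr (emb _ * R).
case: y => y0 y1 y2 y3.
case: j hj => [|[|[|[|]]]] // _; rewrite /= /qadd /qscale /=; congr Q4; ring.
Qed.

End Pair.
End Quat.

Section Global.
Variables (F : fieldType) (A : falgType F) (sigma : A -> A).
Hypothesis two0 : (2%:R : F) = 0.
Hypothesis sig_lin : forall (k : F) (x y : A), sigma (k *: x + y) = k *: sigma x + sigma y.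
Hypothesis sig_mul : forall x y : A, sigma (x * y) = sigma y * sigma x.
Hypothesis sig_inv : forall x : A, sigma (sigma x) = x.
Variables (n : nat) (s z : 'I_n -> A) (a d : 'I_n -> F).
Hypotheses (hss : forall i, s i * s i = (a i)%:A + s i) (hzz : forall i, z i * z i = (d i)%:A)
  (hzs : forall i, z i * s i = z i - s i * z i) (hd : forall i, d i != 0)
  (sig_s : forall i, sigma (s i) = s i) (sig_z : forall i, sigma (z i) = z i).
Hypothesis hcomm : forall i j, i != j ->
  [/\ s i * s j = s j * s i, s i * z j = z j * s i, z i * s j = s j * z i & z i * z j = z j * z i].
Hypothesis hdim : \dim (fullv : {vspace A}) = (4 ^ n)%N.

Lemma sig0 : sigma 0 = 0.
Proof.
have h := sig_lin 1 0 0; rewrite !scale1r addr0 in h.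
by apply: (addrI (sigma 0)); rewrite addr0 -h.
Qed.
Lemma sigD x y : sigma (x + y) = sigma x + sigma y.
Proof. by have := sig_lin 1 x y; rewrite !scale1r. Qed.
Lemma sigZ k x : sigma (k *: x) = k *: sigma x.
Proof. by rewrite -[k *: x]addr0 sig_lin sig0 addr0. Qed.
Lemma sigN x : sigma (- x) = - sigma x.
Proof. by rewrite -scaleN1r sigZ scaleN1r. Qed.
Lemma sigB x y : sigma (x - y) = sigma x - sigma y.
Proof. by rewrite sigD sigN. Qed.
Lemma sig1 : sigma 1 = 1.
Proof.
have h : forall y, y = sigma 1 * y.
  by move=> y; rewrite -{1}(sig_inv y) -[sigma y]mulr1 sig_mul sig_inv.
by rewrite {2}(h 1) mulr1.
Qed.
Lemma sig_sum I r (P : pred I) (G : I -> A) :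
  sigma (\sum_(i <- r | P i) G i) = \sum_(i <- r | P i) sigma (G i).
Proof. exact: (big_morph sigma sigD sig0). Qed.

Lemma addxx (x : A) : x + x = 0.
Proof. by rewrite -mulr2n -scaler_nat two0 scale0r. Qed.
Lemma addxxF (x : F) : x + x = 0.
Proof. by rewrite -mulr2n -mulr_natl two0 mul0r. Qed.
Lemma oppxF (x : F) : - x = x.
Proof. by apply/eqP; rewrite eq_sym -subr_eq0 opprK addxxF. Qed.
Lemma oppx (x : A) : - x = x.
Proof. by apply/eqP; rewrite eq_sym -subr_eq0 opprK addxx. Qed.

Definition E i (x : q4 F) : A := emb (s i) (z i) x.

Lemma E_comm i j x y : i != j -> E i x * E j y = E j y * E i x.
Proof.
move=> ij; have [h1 h2 h3 h4] := hcomm ij.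
apply: emb_comm.
- by apply/esym/emb_comm.
- by apply/esym/emb_comm.
Qed.

Lemma E_comm_prod i (r : seq 'I_n) x (f : 'I_n -> q4 F) : i \notin r ->
  E i x * \prod_(j <- r) E j (f j) = \prod_(j <- r) E j (f j) * E i x.
Proof.
elim: r => [|j r IH]; first by rewrite big_nil mul1r mulr1.
rewrite inE negb_or => /andP[ij nir].
by rewrite big_cons mulrA E_comm // -mulrA IH // mulrA.
Qed.


Lemma oneA_neq0 : (1 : A) != 0.
Proof. exact: oner_neq0. Qed.

Lemma E_scale i c x : c *: E i x = E i (qscale c x).
Proof. exact: emb_scale. Qed.
Lemma E_add i x y : E i x + E i y = E i (qadd x y).
Proof. exact: emb_add. Qed.
Lemma E_mul i x y : E i x * E i y = E i (qmul (a i) (d i) x y).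
Proof. exact: (emb_mul (hss i) (hzz i) (hzs i)). Qed.

Lemma E_sum i x : E i x = \sum_(k < 4) qc k x *: E i (qe F k).
Proof.
rewrite !big_ord_recl big_ord0 addr0 /= !E_scale !E_add.
by case: x => x0 x1 x2 x3; rewrite /qadd /qscale /=; congr (E i (Q4 _ _ _ _)); ring.
Qed.

Definition eK (K : {ffun 'I_n -> 'I_4}) : A := \prod_(i < n) E i (qe F (K i)).

Lemma prod_E_expand (f : 'I_n -> q4 F) :
  \prod_(i < n) E i (f i) =
  \sum_(K : {ffun 'I_n -> 'I_4}) (\prod_(i < n) qc (K i) (f i)) *: eK K.
Proof.
under eq_bigr do rewrite E_sum.
rewrite bigA_distr_bigA; apply: eq_bigr => K _.
by rewrite scaler_prod.
Qed.


Definition O i (j : nat) (w : A) : A := Oq (s i) (z i) (a i) (d i) j w.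

Lemma O_add i j w w' : O i j (w + w') = O i j w + O i j w'.
Proof.
rewrite /O /Oq !(mulrDl, mulrDr); symmetry.
rewrite addrACA; congr (_ + _); rewrite addrACA; congr (_ + _).
by rewrite addrACA.
Qed.

Lemma O_scale i j c w : O i j (c *: w) = c *: O i j w.
Proof. by rewrite /O /Oq !scalerDr -!scalerAr -!scalerAl. Qed.

Lemma O0 i j : O i j 0 = 0.
Proof. by have := O_scale i j 0 0; rewrite !scale0r. Qed.

Fixpoint Psi (K0 : {ffun 'I_n -> 'I_4}) (r : seq 'I_n) (w : A) : A :=
  match r with [::] => w | i :: r' => Psi K0 r' (O i (K0 i) w) end.

Lemma Psi_add K0 r w w' : Psi K0 r (w + w') = Psi K0 r w + Psi K0 r w'.
Proof. by elim: r w w' => [//|i r IH] w w' /=; rewrite O_add IH. Qed.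
Lemma Psi_scale K0 r c w : Psi K0 r (c *: w) = c *: Psi K0 r w.
Proof. by elim: r w => [//|i r IH] w /=; rewrite O_scale IH. Qed.
Lemma Psi0 K0 r : Psi K0 r 0 = 0.
Proof. by have := Psi_scale K0 r 0 0; rewrite !scale0r. Qed.

Lemma qc_qe (j k : 'I_4) : qc j (qe F k) = (j == k)%:R.
Proof.
by case: j k => [[|[|[|[|j]]]] hj] [[|[|[|[|k]]]] hk].
Qed.

Definition cst i : F := (d i * (4 * a i + 1)) ^+ 2.

Lemma s_E i : s i = E i (Q4 0 1 0 0).
Proof. exact: embu. Qed.
Lemma z_E i : z i = E i (Q4 0 0 1 0).
Proof. exact: embv. Qed.

Lemma Psi_prod K0 (r : seq 'I_n) (f : 'I_n -> 'I_4) : uniq r ->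
  Psi K0 r (\prod_(i <- r) E i (qe F (f i))) =
  (\prod_(i <- r) ((K0 i == f i)%:R * cst i)) *: 1.
Proof.
elim: r => [|i r IH]; first by rewrite !big_nil scale1r.
rewrite /= => /andP[nir ur].
rewrite !big_cons /O (Oq_emb (hss i) (hzz i) (hzs i)) //.
- by rewrite Psi_scale IH // scalerA qc_qe.
- by rewrite s_E E_comm_prod.
- by rewrite z_E E_comm_prod.
Qed.


Definition N := #|{ffun 'I_n -> 'I_4}|.
Definition X : N.-tuple A := [tuple eK (enum_val i) | i < N].
Lemma XE (l : 'I_N) : X`_l = eK (enum_val l).
Proof. by rewrite -tnth_nth tnth_mktuple. Qed.

Lemma four0 : (4%:R : F) = 0.
Proof. by rewrite -[4%N]/(2 * 2)%N natrM two0 mul0r. Qed.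

Lemma cst_neq0 i : cst i != 0.
Proof. by rewrite /cst four0 mul0r add0r mulr1 expf_neq0. Qed.

Lemma Psi_sum K0 r (I : Type) (rr : seq I) (P : pred I) (G : I -> A) :
  Psi K0 r (\sum_(l <- rr | P l) G l) = \sum_(l <- rr | P l) Psi K0 r (G l).
Proof. exact: (big_morph (Psi K0 r) (Psi_add K0 r) (Psi0 K0 r)). Qed.

Lemma freeX : free X.
Proof.
apply/freeP => k hk i0.
pose K0 := enum_val i0.
have := congr1 (Psi K0 (index_enum 'I_n)) hk.
rewrite Psi0 Psi_sum.
under eq_bigr do rewrite XE Psi_scale /eK Psi_prod ?index_enum_uniq // scalerA.
rewrite -scaler_suml => /eqP; rewrite scaler_eq0 (negbTE oneA_neq0) orbF => /eqP.
rewrite (bigD1 i0) //= [X in _ + X]big1 ?addr0.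
  move/eqP; rewrite mulf_eq0 => /orP[/eqP //|].
  rewrite prodf_seq_eq0 => /hasP[i _ /=]; rewrite /K0 eqxx mul1r.
  by rewrite (negbTE (cst_neq0 i)).
move=> l hl; apply/eqP; rewrite mulf_eq0; apply/orP; right.
rewrite prodf_seq_eq0; apply/hasP.
have : K0 != enum_val l.
  by apply: contra hl => /eqP h; apply/eqP; apply: enum_val_inj; rewrite -h.
move=> hne.
have /existsP[i hi] : [exists i, K0 i != enum_val l i].
  rewrite -negb_forall; apply: contra hne => /forallP h.
  by apply/eqP/ffunP => i; apply/eqP/h.
by exists i; rewrite ?mem_index_enum //= (negbTE hi) mul0r.
Qed.

Lemma basisX : basis_of fullv X.
Proof.
rewrite basisEfree freeX subvf size_tuple hdim /N card_ffun !card_ord leqnn.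
by [].
Qed.

Lemma expandX y : y = \sum_(l < N) coord X l y *: X`_l.
Proof. exact: (coord_basis basisX (memvf y)). Qed.



Definition phi1 i (x : q4 F) : F := q0 x + a i * q1 x.
Definition phiK (K : {ffun 'I_n -> 'I_4}) : F := \prod_(i < n) phi1 i (qe F (K i)).
Definition phi (y : A) : F := \sum_(l < N) coord X l y * phiK (enum_val l).

Lemma phi_add y y' : phi (y + y') = phi y + phi y'.
Proof. by rewrite /phi -big_split /=; apply: eq_bigr => l _; rewrite linearD /= mulrDl. Qed.
Lemma phi_scale c y : phi (c *: y) = c * phi y.
Proof. by rewrite /phi mulr_sumr; apply: eq_bigr => l _; rewrite linearZ /= mulrA. Qed.
Lemma phi_zero : phi 0 = 0.
Proof. by have := phi_scale 0 0; rewrite scale0r mul0r. Qed.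
Lemma phi_sum (I : Type) (rr : seq I) (P : pred I) (G : I -> A) :
  phi (\sum_(l <- rr | P l) G l) = \sum_(l <- rr | P l) phi (G l).
Proof. exact: (big_morph phi phi_add phi_zero). Qed.

Lemma phi_eK K : phi (eK K) = phiK K.
Proof.
rewrite -(enum_rankK K) -XE /phi (bigD1 (enum_rank K)) //= coord_free ?freeX // eqxx mul1r.
rewrite big1 ?addr0 // => l hl; by rewrite coord_free ?freeX // eq_sym (negbTE hl) mul0r.
Qed.

Lemma phi_prod (f : 'I_n -> q4 F) :
  phi (\prod_(i < n) E i (f i)) = \prod_(i < n) phi1 i (f i).
Proof.
rewrite prod_E_expand phi_sum.
under eq_bigr do rewrite phi_scale phi_eK /phiK -big_split /=.
rewrite -(bigA_distr_bigA (fun i (k : 'I_4) => qc k (f i) * phi1 i (qe F k))) /=; apply: eq_bigr => i _.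
rewrite !big_ord_recl big_ord0 /phi1 /=.
by case: (f i) => x0 x1 x2 x3 /=; ring.
Qed.

Lemma E_one i : E i (Q4 1 0 0 0) = 1.
Proof. by rewrite /E -emb1. Qed.

Lemma phi_one : phi 1 = 1.
Proof.
have -> : (1 : A) = \prod_(i < n) E i (Q4 1 0 0 0) by rewrite big1 // => i _; rewrite E_one.
by rewrite phi_prod big1 // => i _; rewrite /phi1 /= mulr0 addr0.
Qed.


Definition qsig (x : q4 F) : q4 F := Q4 (q0 x) (q1 x) (q2 x + q3 x) (- q3 x).

Lemma sig_E i x : sigma (E i x) = E i (qsig x).
Proof.
rewrite /E !embE /= !sigD !sigZ sig1 sig_s sig_z sig_mul sig_s sig_z hzs.
by rewrite scalerBr scalerDl scaleNr !addrA.
Qed.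

Lemma sig_prod (r : seq 'I_n) (f : 'I_n -> q4 F) : uniq r ->
  sigma (\prod_(i <- r) E i (f i)) = \prod_(i <- r) E i (qsig (f i)).
Proof.
elim: r => [|i r IH]; first by rewrite !big_nil sig1.
rewrite /= => /andP[nir ur].
by rewrite !big_cons sig_mul IH // sig_E E_comm_prod.
Qed.

Lemma prod_mul (r : seq 'I_n) (f g : 'I_n -> q4 F) : uniq r ->
  (\prod_(i <- r) E i (f i)) * (\prod_(i <- r) E i (g i)) =
  \prod_(i <- r) E i (qmul (a i) (d i) (f i) (g i)).
Proof.
elim: r => [|i r IH]; first by rewrite !big_nil mul1r.
rewrite /= => /andP[nir ur].
rewrite !big_cons -IH // -E_mul -!mulrA; congr (_ * _).
by rewrite !mulrA E_comm_prod.
Qed.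

Lemma phi_sig y : phi (sigma y) = phi y.
Proof.
rewrite [in LHS](expandX y) [in RHS](expandX y) sig_sum !phi_sum; apply: eq_bigr => l _.
rewrite sigZ !phi_scale XE /eK sig_prod ?index_enum_uniq // !phi_prod.
by [].
Qed.

Definition fq (y : A) : F := phi (sigma y * y).

Lemma fq_add y y' : fq (y + y') = fq y + fq y'.
Proof.
rewrite /fq sigD !(mulrDl, mulrDr) !phi_add.
have -> : sigma y' * y = sigma (sigma y * y') by rewrite sig_mul sig_inv.
rewrite phi_sig.
rewrite -!addrA; congr (_ + _); rewrite addrCA addrA addxxF add0r.
by [].
Qed.

Lemma fq_scale c y : fq (c *: y) = c ^+ 2 * fq y.
Proof. by rewrite /fq sigZ -scalerAl -scalerAr scalerA phi_scale expr2. Qed.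

Lemma fq_zero : fq 0 = 0.
Proof. by rewrite /fq mulr0 phi_zero. Qed.

Lemma fq_comb (k : 'I_N -> F) :
  fq (\sum_(l < N) k l *: X`_l) = \sum_(l < N) k l ^+ 2 * fq (X`_l).
Proof.
elim/big_rec2: _ => [|l y1 y2 _ h]; first exact: fq_zero.
by rewrite fq_add fq_scale h.
Qed.

Definition val i (k : 'I_4) : F := phi1 i (qmul (a i) (d i) (qsig (qe F k)) (qe F k)).

Lemma fq_eK K : fq (eK K) = \prod_(i < n) val i (K i).
Proof.
by rewrite /fq /eK sig_prod ?index_enum_uniq // prod_mul ?index_enum_uniq // phi_prod.
Qed.

Lemma val_eq i (k : 'I_4) :
  val i k = if k == 1 :> nat then 0 else if (2 <= k)%N then d i else 1.
Proof.
case: k => [[|[|[|[|k]]]] hk] //; rewrite /val /phi1 /=.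
- by ring.
- by transitivity (a i + a i); [ring | exact: addxxF].
- by ring.
- by ring.
Qed.

Definition inQ (x : F) := exists w : {set 'I_n} -> F, x = pfister_value d w.

Lemma inQ0 : inQ 0.
Proof. by exists (fun _ => 0); rewrite /pfister_value big1 // => S _; rewrite expr0n mulr0. Qed.

Lemma inQ_add x y : inQ x -> inQ y -> inQ (x + y).
Proof.
move=> [w ->] [w' ->]; exists (fun S => w S + w' S).
rewrite /pfister_value -big_split /=; apply: eq_bigr => S _.
by rewrite sqrrD -mulr_natr two0 mulr0 addr0 mulrDr.
Qed.

Lemma inQ_sq x c : inQ x -> inQ (c ^+ 2 * x).
Proof.
move=> [w ->]; exists (fun S => c * w S).
rewrite /pfister_value mulr_sumr; apply: eq_bigr => S _.
by rewrite exprMn mulrCA.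
Qed.

Lemma inQ_sum (I : Type) (rr : seq I) (P : pred I) (G : I -> F) :
  (forall i, P i -> inQ (G i)) -> inQ (\sum_(i <- rr | P i) G i).
Proof. by move=> h; elim/big_ind: _ => //; [exact: inQ0 | exact: inQ_add]. Qed.

Lemma inQ_entry S : inQ (pfister_entry d S).
Proof.
exists (fun T => (T == S)%:R); rewrite /pfister_value (bigD1 S) //= eqxx expr1n mulr1.
by rewrite big1 ?addr0 // => T /negbTE ->; rewrite expr0n mulr0.
Qed.

Lemma inQ_eK K : inQ (\prod_(i < n) val i (K i)).
Proof.
case: (boolP [exists i, K i == 1 :> nat]) => [/existsP[i hi]|hno].
  by rewrite (bigD1 i) //= val_eq hi mul0r; exact: inQ0.
have -> : \prod_(i < n) val i (K i) = pfister_entry d [set i | (2 <= K i)%N].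
  rewrite /pfister_entry [RHS]big_mkcond; apply: eq_bigr => i _.
  rewrite val_eq inE; case: ifP => // hi.
  by move/existsP: hno; case; exists i.
exact: inQ_entry.
Qed.

Lemma fq_inQ y : inQ (fq y).
Proof.
rewrite (expandX y) fq_comb; apply: inQ_sum => l _.
by apply: inQ_sq; rewrite XE fq_eK; exact: inQ_eK.
Qed.

Theorem partC (alpha : F) (m : nat) (x : 'I_m -> A) :
  Alt sigma (alpha%:A + \sum_(i < m) sigma (x i) * x i) -> inQ alpha.
Proof.
case=> y hy.
have h1 : phi (alpha%:A + \sum_(i < m) sigma (x i) * x i) = alpha + \sum_(i < m) fq (x i).
  by rewrite phi_add phi_scale phi_one mulr1 phi_sum.
have h2 : phi (sigma y - y) = 0.
  by rewrite phi_add -scaleN1r phi_scale phi_sig mulN1r subrr.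
move: h1; rewrite hy h2 => /esym/eqP; rewrite addr_eq0 => /eqP ->; rewrite oppxF.
by apply: inQ_sum => i _; exact: fq_inQ.
Qed.

End Global.

Section Comp.
Variables (F : fieldType) (A : falgType F) (sigma : A -> A).
Hypothesis two0 : (2%:R : F) = 0.
Hypothesis sig_lin : forall (k : F) (x y : A), sigma (k *: x + y) = k *: sigma x + sigma y.
Hypothesis sig_mul : forall x y : A, sigma (x * y) = sigma y * sigma x.
Hypothesis sig_inv : forall x : A, sigma (sigma x) = x.
Hypothesis Horth : orthogonal_inv sigma.

Definition tau (y : A) := sigma y + y.
Fact tau_lin : linear tau.
Proof.
move=> k x y; rewrite /tau sig_lin.
by rewrite scalerDr -!addrA; congr (_ + _); rewrite addrCA.
Qed.
HB.instance Definition _ := GRing.isLinear.Build F A A *:%R tau tau_lin.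

Lemma tauE y : linfun tau y = sigma y + y.
Proof. by rewrite lfunE. Qed.


Let oA (x : A) : - x = x := oppx (A:=A) two0 x.
Let oF (x : F) : - x = x := oppxF two0 x.
Let aA (x : A) : x + x = 0 := addxx (A:=A) two0 x.
Let sD := sigD sig_lin.
Let sZ := sigZ sig_lin.
Let s1 : sigma 1 = 1 := sig1 sig_mul sig_inv.

Variables (u v : A) (a b : F).
Hypothesis Hq : is_quaternion_pair u v a b.
Hypotheses (Hsu : sigma u \in quat_span u v) (Hsv : sigma v \in quat_span u v).
Variable dd : F.
Hypothesis Hd : represents_disc sigma u v dd.

Let huu : u * u = a%:A + u.
Proof. by case: Hq => h _ _ _ _; rewrite -h -addrA aA addr0. Qed.
Let hvv : v * v = b%:A.
Proof. by case: Hq. Qed.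
Let hvu : v * u = v - u * v.
Proof. by case: Hq => _ _ _ -> _; rewrite mulrDl mul1r oA addrC. Qed.
Let hfree : free (quat_basis u v).
Proof. by case: Hq. Qed.

Local Notation Qs := (quat_span u v).
Local Notation em := (emb u v).

Lemma Xq_nth (i : 'I_4) : (quat_basis u v)`_i = em (qe F i).
Proof.
case: i => [[|[|[|[|i]]]] hi] //=.
- exact: emb1. - exact: embu. - exact: embv. - exact: embw.
Qed.

Lemma emb_in x : em x \in Qs.
Proof.
by rewrite embE !memvD ?memvZ //; apply: memv_span; rewrite /= !inE eqxx ?orbT.
Qed.

Lemma in_emb y : y \in Qs -> exists x, y = em x.
Proof.
move/coord_span => ->.
rewrite !big_ord_recl big_ord0 addr0 !Xq_nth !emb_scale !emb_add.
by eexists.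
Qed.


Lemma emb_sum4 x : em x = \sum_(i < 4) qc i x *: (quat_basis u v)`_i.
Proof.
rewrite !big_ord_recl big_ord0 addr0 !Xq_nth /= !emb_scale !emb_add.
by case: x => x0 x1 x2 x3; rewrite /qadd /qscale /=; congr (emb _ _ (Q4 _ _ _ _)); ring.
Qed.

Lemma coord_emb (j : 'I_4) x : coord (quat_basis u v) j (em x) = qc j x.
Proof. by rewrite emb_sum4 coord_sum_free. Qed.

Definition Trd (y : A) : F := coord (quat_basis u v) (inord 1) y.

Lemma Trd_emb x : Trd (em x) = q1 x.
Proof. by rewrite /Trd coord_emb inordK. Qed.

Lemma emb_inj x y : em x = em y -> x = y.
Proof.
move=> h.
have hc : forall j : 'I_4, qc j x = qc j y by move=> j; rewrite -!coord_emb h.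
have h0 := hc (inord 0); have h1 := hc (inord 1); have h2 := hc (inord 2); have h3 := hc (inord 3).
rewrite !inordK // in h0 h1 h2 h3.
by clear h hc; move: h0 h1 h2 h3; case: x => x0 x1 x2 x3; case: y => y0 y1 y2 y3 /= -> -> -> ->.
Qed.

Lemma one_in : (1 : A) \in Qs.
Proof. by rewrite (emb1 u v) emb_in. Qed.

Lemma mul_in y y' : y \in Qs -> y' \in Qs -> y * y' \in Qs.
Proof.
by move=> /in_emb[x ->] /in_emb[x' ->]; rewrite (emb_mul huu hvv hvu) emb_in.
Qed.

Lemma sig_in y : y \in Qs -> sigma y \in Qs.
Proof.
move=> /in_emb[x ->]; rewrite embE !sD !sZ s1 sig_mul.
by rewrite !memvD ?memvZ ?one_in ?mul_in.
Qed.

Lemma tau_in y : y \in Qs -> tau y \in Qs.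
Proof. by move=> hy; rewrite /tau memvD ?sig_in. Qed.

Lemma tau_tau y : tau (tau y) = 0.
Proof. by rewrite /tau sD sig_inv [sigma y + y]addrC aA. Qed.

Lemma dimQ : \dim Qs = 4%N.
Proof. by have := hfree; rewrite /free => /eqP. Qed.

Local Notation Img := (linfun tau @: Qs)%VS.

Lemma img_sub : (Img <= Qs :&: lker (linfun tau))%VS.
Proof.
apply/subvP => w /memv_imgP[y hy ->].
by rewrite memv_cap memv_ker !lfunE /= tau_in // tau_tau eqxx.
Qed.

Lemma img_dim : (\dim Img <= 1)%N.
Proof.
have := limg_ker_dim (linfun tau) Qs; rewrite dimQ => hsum.
have h1 := dimvS img_sub.
case: (leqP (\dim Img) 1) => // h2; exfalso.
have eqI : Img == (Qs :&: lker (linfun tau))%VS by rewrite eqEdim img_sub /=; lia.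
have : (1 : A) \in (Qs :&: lker (linfun tau))%VS.
  by rewrite memv_cap one_in memv_ker tauE s1 aA eqxx.
move=> h1in; have : (1 : A) \in Img by rewrite (eqP eqI).
move=> /memv_imgP[w hw]; rewrite tauE => h.
by apply: Horth; exists w; rewrite h oA.
Qed.


Let sN := sigN sig_lin.

Lemma emb_scalar c : em (Q4 c 0 0 0) = c%:A.
Proof. by rewrite embE /= !scale0r !addr0. Qed.

Lemma nrd_scalar x : exists N, em x * em (Q4 (q0 x + q1 x) (q1 x) (q2 x) (q3 x)) = N%:A.
Proof.
rewrite (emb_mul huu hvv hvu); case: x => x0 x1 x2 x3 /=.
eexists; rewrite -emb_scalar; congr (emb _ _ (Q4 _ _ _ _)).
- transitivity (2%:R * (x0 * x1 + x1 * x1)); first by ring.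
  by rewrite two0 mul0r.
- transitivity (2%:R * (x0 * x2 + x1 * x2)); first by ring.
  by rewrite two0 mul0r.
- transitivity (2%:R * (x0 * x3 + x1 * x3)); first by ring.
  by rewrite two0 mul0r.
Qed.

Lemma z_props x0 : x0 \in Qs ->
  [/\ sigma x0 - x0 \in Qs, sigma (sigma x0 - x0) = sigma x0 - x0 &
     (sigma x0 - x0) \in Img].
Proof.
move=> hx0; have zt : sigma x0 - x0 = tau x0 by rewrite /tau oA.
split; first by rewrite zt tau_in.
- by rewrite !oA sD sig_inv addrC.
- by apply/memv_imgP; exists x0 => //; rewrite tauE zt.
Qed.

Section Zsec.
Variable z : A.
Hypotheses (z_in : z \in Qs) (z_sig : sigma z = z) (z_img : z \in Img)
  (z_nrd : z * (z + (Trd z)%:A) = dd%:A) (hdd : dd != 0).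

Lemma z_neq0 : z != 0.
Proof.
apply/eqP => h; move: z_nrd; rewrite h mul0r => /esym/eqP.
by rewrite scaler_eq0 oner_eq0 orbF (negbTE hdd).
Qed.

Lemma z_canc X : z * X = 0 -> X = 0.
Proof.
move=> h.
have tz : (z + (Trd z)%:A) * z = z * (z + (Trd z)%:A).
  by rewrite mulrDl mulrDr mulr_algl mulr_algr.
have : (z + (Trd z)%:A) * z * X = 0 by rewrite -mulrA h mulr0.
rewrite tz z_nrd mulr_algl => /eqP; rewrite scaler_eq0 (negbTE hdd) /= => /eqP.
by [].
Qed.

Lemma z_line w : w \in Qs -> exists k, sigma w + w = k *: z.
Proof.
move=> hw.
have e : (<[z]> == Img)%VS.
  by rewrite eqEdim -memvE dim_vline z_neq0 img_dim andbT.
have : tau w \in <[z]>%VS.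
  by rewrite (eqP e); have := memv_img (linfun tau) hw; rewrite lfunE.
by move/vlineP.
Qed.

Lemma z_rel w : w \in Qs -> exists k, sigma w * z = k *: z + z * w.
Proof.
move=> hw; have [k hk] := z_line (mul_in z_in hw).
exists k; rewrite sig_mul z_sig in hk.
by rewrite -hk -addrA aA addr0.
Qed.

Lemma key : sigma u * z = z * (u + 1) /\ sigma v * z = z * v.
Proof.
have uin : u \in Qs by have := emb_in (Q4 0 1 0 0); rewrite -embu.
have vin : v \in Qs by have := emb_in (Q4 0 0 1 0); rewrite -embv.
have [k1 h1] := z_rel uin.
have [k2 h2] := z_rel vin.
have [k3 h3] := z_rel (mul_in uin vin).
have e : z * (k3%:A + u * v) = z * ((k1 * k2)%:A + k1 *: v + k2 *: u + v * u).
  rewrite mulrDr mulr_algr -h3 sig_mul -mulrA h1 mulrDr -scalerAr (mulrA (sigma v)) h2.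
  rewrite !mulrDr !mulrDl !mulr_algr !scalerDr -!scalerAl -!mulrA !scalerA.
  by rewrite -!scalerAr !addrA.
move: e; move/eqP; rewrite -subr_eq0 -mulrBr => /eqP /z_canc /eqP; rewrite subr_eq0 => /eqP eLR.
have eL : k3%:A + u * v = em (Q4 k3 0 0 1) by rewrite embE /= !scale0r !addr0 scale1r.
have eR : (k1 * k2)%:A + k1 *: v + k2 *: u + v * u = em (Q4 (k1 * k2) k2 (k1 + 1) (-1)).
  by rewrite embE /= hvu scalerDl scale1r scaleN1r (addrAC _ (k1 *: v)) !addrA.
move: eLR; rewrite eL eR => /emb_inj [_ hk2 hk1 _].
have hk1' : k1 = -1 by apply/eqP; rewrite -subr_eq0 opprK -hk1.
split.
- by rewrite h1 hk1' scaleN1r oA mulrDr mulr1 addrC.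
- by rewrite h2 -hk2 scale0r add0r.
Qed.

Lemma hv_u1 : v * (u + 1) = u * v.
Proof. by rewrite mulrDr mulr1 hvu addrAC aA add0r oA. Qed.

Lemma sig_z_emb x : sigma (em x) * z = z * em (Q4 (q0 x + q1 x) (q1 x) (q2 x) (q3 x)).
Proof.
have [ku kv] := key.
rewrite embE !sD !sZ s1 sig_mul !mulrDl -!scalerAl mul1r -mulrA ku mulrA kv -mulrA hv_u1.
rewrite embE /= !mulrDr -!scalerAr !mulr1 !scalerDr scalerDl !addrA.
by rewrite (addrAC (q0 x *: z) (q1 x *: (z * u))).
Qed.


Lemma gam_emb x : em (Q4 (q0 x + q1 x) (q1 x) (q2 x) (q3 x)) = em x + (q1 x)%:A.
Proof.
rewrite -emb_scalar emb_add; case: x => x0 x1 x2 x3.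
by rewrite /qadd /= !addr0.
Qed.

Lemma Trd_z0 : Trd z = 0.
Proof.
have [t ht] := in_emb z_in.
have := sig_z_emb t; rewrite gam_emb -ht z_sig mulrDr => h.
have : z * (q1 t)%:A = 0 by apply: (addrI (z * z)); rewrite addr0 -h.
move/z_canc/eqP; rewrite scaler_eq0 oner_eq0 orbF => /eqP h1.
by rewrite ht Trd_emb.
Qed.

Lemma z_sq : z * z = dd%:A.
Proof. by have := z_nrd; rewrite Trd_z0 scale0r addr0. Qed.

Lemma Trd_lin c y : Trd (c *: y) = c * Trd y.
Proof. by rewrite /Trd linearZ. Qed.

Lemma s_from w c : w \in Qs -> Trd w = 0 -> Trd (z * w) = c -> c != 0 ->
  exists s a', [/\ s \in Qs, s * s = a'%:A + s, z * s = z - s * z & sigma s = s].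
Proof.
move=> win tw tzw cn0.
have sw : sigma w * z = z * w.
  have [o ho] := in_emb win.
  by rewrite ho sig_z_emb gam_emb -Trd_emb -ho tw scale0r addr0.
pose s := c^-1 *: (z * w).
have sin : s \in Qs by rewrite memvZ // mul_in.
have ss : sigma s = s by rewrite /s sZ sig_mul z_sig sw.
have ts : Trd s = 1 by rewrite /s Trd_lin tzw mulVf.
have [o ho] := in_emb sin.
have o1 : q1 o = 1 by rewrite -Trd_emb -ho.
have hsz : s * z = z * s + z.
  by rewrite -{1}ss ho sig_z_emb gam_emb -ho o1 scale1r mulrDr mulr1.
have [N hN'] := nrd_scalar o.
move: hN'; rewrite gam_emb -ho o1 scale1r mulrDr mulr1 => hN'.
exists s, N; split => //.
- by rewrite -hN' -addrA aA addr0.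
- by rewrite hsz oA addrCA aA addr0.
Qed.

Lemma s_exists :
  exists s a', [/\ s \in Qs, s * s = a'%:A + s, z * s = z - s * z & sigma s = s].
Proof.
have [t ht] := in_emb z_in.
have t1 : q1 t = 0 by rewrite -Trd_emb -ht Trd_z0.
have zw x : z * em x = em (qmul a b t x) by rewrite ht (emb_mul huu hvv hvu).
have [h3|h3] := eqVneq (q3 t) 0; last first.
  apply: (@s_from (em (Q4 0 0 1 0)) (b * q3 t)).
  - exact: emb_in.
  - by rewrite Trd_emb.
  - rewrite zw Trd_emb; case: t ht t1 h3 zw => t0 t1' t2 t3 /= _ -> _ _; ring.
  - by rewrite mulf_neq0 //; case: Hq.
have [h2|h2] := eqVneq (q2 t) 0; last first.
  apply: (@s_from (em (Q4 0 0 0 1)) (- b * q2 t)).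
  - exact: emb_in.
  - by rewrite Trd_emb.
  - rewrite zw Trd_emb; case: t ht t1 h3 h2 zw => t0 t1' t2 t3 /= _ -> _ _ _; ring.
  - by rewrite mulf_neq0 // oppr_eq0; case: Hq.
exfalso.
have zt : z = (q0 t)%:A.
  by rewrite ht -emb_scalar; case: t ht t1 h3 h2 {zw} => t0 t1' t2 t3 /= _ -> -> ->.
have t0n : q0 t != 0.
  by apply: contraNneq z_neq0; rewrite zt => ->; rewrite scale0r.
have [ku _] := key.
move: ku; rewrite zt mulr_algr mulr_algl => /scalerI => /(_ t0n) hu.
by apply: Horth; exists u; rewrite hu addrAC subrr add0r.
Qed.

End Zsec.


Lemma comp_main : exists s z a',
  [/\ s \in Qs, z \in Qs, s * s = a'%:A + s, z * z = dd%:A &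
     [/\ z * s = z - s * z, sigma s = s & sigma z = z]].
Proof.
case: Hd => hdd [x0 hx0 hN].
have [zin zsig zimg] := z_props hx0.
have [s [a' [sin hss hzs hs]]] := s_exists zin zsig zimg hN hdd.
exists s, (sigma x0 - x0), a'; split => //.
exact: z_sq zin zsig zimg hN hdd.
Qed.

End Comp.

Unset Implicit Arguments. Set Strict Implicit. Set Printing Implicit Defensive.

Theorem lemma4p8 (F : fieldType) (A : falgType F) (sigma : A -> A)
  (char2 : 2%N \in [pchar F])
  (Hinv : is_involution sigma) (Horth : orthogonal_inv sigma)
  (n : nat) (u v : 'I_n -> A) (a b : 'I_n -> F)
  (Hdec : totally_decomposed sigma u v a b)
  (d : 'I_n -> F) (Hd : forall i, represents_disc sigma (u i) (v i) (d i))
  (alpha : F) (m : nat) (x : 'I_m -> A)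
  (Halt : Alt sigma (alpha%:A + \sum_(i < m) sigma (x i) * x i)) :
  Q_pfister d alpha.
Proof.
have two0 : (2%:R : F) = 0 := pcharf0 char2.
case: Hinv => sig_lin sig_mul sig_inv.
case: Hdec => Hq Hsig Hcomm Hdim.
pose P i (p : A * A * F) :=
  [/\ p.1.1 \in quat_span (u i) (v i), p.1.2 \in quat_span (u i) (v i),
      p.1.1 * p.1.1 = p.2%:A + p.1.1, p.1.2 * p.1.2 = (d i)%:A &
     [/\ p.1.2 * p.1.1 = p.1.2 - p.1.1 * p.1.2, sigma p.1.1 = p.1.1 & sigma p.1.2 = p.1.2]].
have H i : exists p, P i p.
  have [hu hv] := Hsig i.
  have [s [z [a' h]]] := comp_main two0 sig_lin sig_mul sig_inv Horth (Hq i) hu hv (Hd i).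
  by exists (s, z, a').
pose f i := proj1_sig (constructive_indefinite_description _ (H i)).
have hf i : P i (f i) := proj2_sig (constructive_indefinite_description _ (H i)).
have hdn i : d i != 0 by case: (Hd i).
have := @partC F A sigma two0 sig_lin sig_mul sig_inv n (fun i => (f i).1.1) (fun i => (f i).1.2)
  (fun i => (f i).2) d.
case/(_ _ _ _ hdn _ _ _ Hdim alpha m x Halt).
- by move=> i; case: (hf i).
- by move=> i; case: (hf i).
- by move=> i; case: (hf i) => _ _ _ _ [].
- by move=> i; case: (hf i) => _ _ _ _ [].
- by move=> i; case: (hf i) => _ _ _ _ [].
- move=> i j ij; case: (hf i) => si zi _ _ _; case: (hf j) => sj zj _ _ _.
  by split; apply: (Hcomm i j ij).
move=> w hw.
case: (boolP [exists S, w S != 0]) => [/existsP[S hS]|hno].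
  by left; exists w => //; exists S.
right; rewrite hw /pfister_value big1 // => S _.
have : w S == 0 by move/existsP: hno => hno; apply/negPn; apply/negP => h; apply: hno; exists S.
by move/eqP ->; rewrite expr0n mulr0.
Qed.
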